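(* Let $Q$ be an $ADE$ Dynkin type quiver and $\mathcal{E}$ an exact structure on $\operatorname{rep}(Q)$. Let $T,T'\in\operatorname{Tilt}(Q)$. If $T'\approx_{\mathcal{E}}T$, then $\operatorname{GS}_{\mathcal{E}}(T')=\operatorname{GS}_{\mathcal{E}}(T)$.
   Context: $Q$ is a quiver whose underlying graph is a Dynkin diagram of type $A_n$, $D_n$ ($n\ge4$), $E_6$, $E_7$ or $E_8$; $\operatorname{rep}(Q)$ is the (hereditary, abelian) category of finite-dimensional representations over an algebraically closed field. Subcategories are full and additive (closed under finite sums and summands). An exact structure $\mathcal{E}$ is a class of short exact sequences closed under isomorphism, containing split sequences, whose $\mathcal{E}$-monomorphisms and $\mathcal{E}$-epimorphisms are closed under composition, and closed under pushouts and pullbacks along arbitrary morphisms. $\operatorname{Gen}_{\mathcal{E}}(\mathscr{C})$: additively generated by cokernels of $\mathcal{E}$-monomorphisms $X\to Y$ with $Y\in\mathscr{C}$; $\operatorname{Sub}_{\mathcal{E}}(\mathscr{C})$: additively generated by kernels of $\mathcal{E}$-epimorphisms $Y\to X$ with $Y\in\mathscr{C}$; $\operatorname{GS}^0_{\mathcal{E}}(\mathscr{C})=\mathscr{C}$, $\operatorname{GS}^i_{\mathcal{E}}(\mathscr{C})$ additively generated by $\operatorname{Gen}_{\mathcal{E}}(\operatorname{GS}^{i-1}_{\mathcal{E}}(\mathscr{C}))\cup\operatorname{Sub}_{\mathcal{E}}(\operatorname{GS}^{i-1}_{\mathcal{E}}(\mathscr{C}))$, $\operatorname{GS}_{\mathcal{E}}(\mathscr{C})=\bigcup_i\operatorname{GS}^i_{\mathcal{E}}(\mathscr{C})$,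 $\operatorname{GS}_{\mathcal{E}}(T)=\operatorname{GS}_{\mathcal{E}}(\operatorname{add}T)$. $\operatorname{Tilt}(Q)$ is the set of isomorphism classes of tilting representations ($\operatorname{Ext}^1(T,T)=0$ and each projective $P$ fits in $0\to P\to T_0\to T_1\to0$ with $T_i\in\operatorname{add}T$). Approximations: for a subcategory $\mathscr{M}$, a left $\mathscr{M}$-approximation of $X$ is $f:X\to C$, $C\in\mathscr{M}$, through which every map from $X$ to an object of $\mathscr{M}$ factors; minimal if every $\alpha:C\to C$ with $\alpha f=f$ is an isomorphism; a left $(\mathscr{M},\mathcal{E})$-approximation if also $f$ is an $\mathcal{E}$-monomorphism; right versions $g:C\to X$ are dual ($g\beta=g$, $g$ an $\mathcal{E}$-epimorphism). For $T\in\operatorname{Tilt}(Q)$ and indecomposable $U$: if $U$ is a summand, $T=\widetilde T\oplus U$, and $U$ has a minimal left $(\operatorname{add}\widetilde T,\mathcal{E})$-approximation $f$, then $T$ admits a left $\mathcal{E}$-mutation at $U$ and $\mu^-_{U,\mathcal{E}}(T)=\widetilde T\oplus\operatorname{Coker}f$; if $U$ has a minimal right $(\operatorname{add}\widetilde T,\mathcal{E})$-approximation $g$, $T$ admits a right $\mathcal{E}$-mutation and $\mu^+_{U,\mathcal{E}}(T)=\widetilde T\oplus\operatorname{Ker}g$ (at most one of these occurs). $\mu_{U,\mathcal{E}}(T)$ is $\mu^-_{U,\mathcal{E}}(T)$, resp. $\mu^+_{U,\mathcal{E}}(T)$, if the corresponding mutation exists, and $T$ otherwise. $T\approx_{\mathcal{E}}T'$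 iff $T'\cong\mu_{U_m,\mathcal{E}}\circ\cdots\circ\mu_{U_1,\mathcal{E}}(T)$ for some indecomposables $U_1,\dots,U_m$ ($m\ge0$). *)

(* Defs.v *)
(* Finite-dimensional representations of a finite quiver
   over a field, encoded concretely by matrices (row-vector convention:
   a linear map V -> W is a matrix M acting by v |-> v *m M). *)
From HB Require Import structures.
From mathcomp Require Import all_boot all_order all_algebra.
Set Implicit Arguments. Unset Strict Implicit. Unset Printing Implicit Defensive.
Import GRing.Theory.
Local Open Scope ring_scope.

Record quiver := Quiver {
  nv : nat;
  na : nat;
  src : 'I_na -> 'I_nv;
  tgt : 'I_na -> 'I_nv }.

Inductive dynkin_type := TypeA | TypeD | TypeE.

Definition dynkin_valid (t : dynkin_type) (n : nat) : bool :=
  match t with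
  | TypeA => (1 <= n)%N
  | TypeD => (4 <= n)%N
  | TypeE => (n == 6%N) || (n == 7%N) || (n == 8%N)
  end.

(* adjacency of the Dynkin diagram on vertices 0..n-1:
   A_n : path 0 - 1 - ... - (n-1)
   D_n : path 0 - ... - (n-2), plus the edge {n-3, n-1}
   E_n : path 0 - ... - (n-2), plus the edge {2, n-1}           *)
Definition path_adj (m i j : nat) : bool :=
  ((i.+1 == j) && (j < m)%N) || ((j.+1 == i) && (i < m)%N).

Definition dynkin_adj (t : dynkin_type) (n : nat) (i j : 'I_n) : bool :=
  match t with
  | TypeA => path_adj n i j
  | TypeD => path_adj n.-1 i j
             || ((i == (n - 3)%N :> nat) && (j == n.-1 :> nat))
             || ((j == (n - 3)%N :> nat) && (i == n.-1 :> nat))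
  | TypeE => path_adj n.-1 i j
             || ((i == 2%N :> nat) && (j == n.-1 :> nat))
             || ((j == 2%N :> nat) && (i == n.-1 :> nat))
  end.

(* the underlying (multi)graph of Q is isomorphic to a Dynkin diagram of
   type A_n, D_n (n >= 4), E_6, E_7, E_8: for every pair of vertices, the
   number of arrows between them (in either direction) is 1 if the
   corresponding vertices are adjacent in the diagram and 0 otherwise. *)
Definition ADE_quiver (Q : quiver) : Prop :=
  exists (t : dynkin_type) (n : nat), dynkin_valid t n /\
  exists sigma : 'I_(nv Q) -> 'I_n, bijective sigma /\
    forall i j : 'I_(nv Q),
      #|[pred a : 'I_(na Q) | ((src a == i) && (tgt a == j))
                              || ((src a == j) && (tgt a == i))]|
      = nat_of_bool (dynkin_adj t (sigma i) (sigma j)).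

Section Reps.
Variable F : fieldType.
Variable Q : quiver.

Record rep := Rep {
  rdim : 'I_(nv Q) -> nat;
  rmap : forall a : 'I_(na Q), 'M[F]_(rdim (src a), rdim (tgt a)) }.

Record hom (X Y : rep) := Hom {
  hmat : forall i : 'I_(nv Q), 'M[F]_(rdim X i, rdim Y i);
  hcomm : forall a : 'I_(na Q),
      rmap X a *m hmat (tgt a) = hmat (src a) *m rmap Y a }.

Definition heq (X Y : rep) (f g : hom X Y) : Prop :=
  forall i, hmat f i = hmat g i.

Lemma hcomp_comm (X Y Z : rep) (f : hom X Y) (g : hom Y Z) (a : 'I_(na Q)) :
  rmap X a *m (hmat f (tgt a) *m hmat g (tgt a))
  = (hmat f (src a) *m hmat g (src a)) *m rmap Z a.
Proof. by rewrite mulmxA hcomm -!mulmxA hcomm. Qed.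

(* composition, written in diagrammatic order: first f, then g *)
Definition hcomp (X Y Z : rep) (f : hom X Y) (g : hom Y Z) : hom X Z :=
  @Hom X Z (fun i => hmat f i *m hmat g i) (hcomp_comm f g).

Lemma hid_comm (X : rep) (a : 'I_(na Q)) :
  rmap X a *m 1%:M = 1%:M *m rmap X a.
Proof. by rewrite mulmx1 mul1mx. Qed.

Definition hid (X : rep) : hom X X := @Hom X X (fun i => 1%:M) (@hid_comm X).

Definition is_iso_hom (X Y : rep) (f : hom X Y) : Prop :=
  exists g : hom Y X, heq (hcomp f g) (hid X) /\ heq (hcomp g f) (hid Y).

Definition iso (X Y : rep) : Prop := exists f : hom X Y, is_iso_hom f.

Definition zrep : rep := @Rep (fun _ => 0%N) (fun a => 0).

Definition dsum (X Y : rep) : rep :=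
  @Rep (fun i => (rdim X i + rdim Y i)%N)
       (fun a => block_mx (rmap X a) 0 0 (rmap Y a)).

Definition bigdsum (s : seq rep) : rep := foldr dsum zrep s.

Definition is_zero (X : rep) : Prop := forall i, rdim X i = 0%N.

Definition indec (X : rep) : Prop :=
  ~ is_zero X /\ forall A B : rep, iso X (dsum A B) -> is_zero A \/ is_zero B.

Definition is_summand (X Y : rep) : Prop :=
  exists (s : hom X Y) (r : hom Y X), heq (hcomp s r) (hid X).

Fixpoint all_in (P : rep -> Prop) (s : seq rep) : Prop :=
  match s with nil => True | y :: s' => P y /\ all_in P s' end.

Definition add (P : rep -> Prop) (X : rep) : Prop :=
  exists s : seq rep, all_in P s /\ is_summand X (bigdsum s).

Definition addT (T : rep) : rep -> Prop := add (fun Y => Y = T).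

Record ses := Ses {
  sX : rep; sY : rep; sZ : rep;
  sf : hom sX sY; sg : hom sY sZ }.

Definition exact_pair (X Y Z : rep) (f : hom X Y) (g : hom Y Z) : Prop :=
  forall i, [/\ row_free (hmat f i), row_full (hmat g i)
              & (hmat f i == kermx (hmat g i))%MS].

Definition exact (s : ses) : Prop := exact_pair (sf s) (sg s).

Definition split_ses (s : ses) : Prop :=
  exact s /\ exists r : hom (sY s) (sX s), heq (hcomp (sf s) r) (hid _).

Definition ses_iso (s s' : ses) : Prop :=
  exists (a : hom (sX s) (sX s')) (b : hom (sY s) (sY s'))
         (c : hom (sZ s) (sZ s')),
    [/\ is_iso_hom a, is_iso_hom b, is_iso_hom c,
        heq (hcomp (sf s) b) (hcomp a (sf s'))
      & heq (hcomp (sg s) c) (hcomp b (sg s'))].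

Section Exact.
Variable E : ses -> Prop.

Definition E_mono (X Y : rep) (f : hom X Y) : Prop :=
  exists (Z : rep) (g : hom Y Z), E (Ses f g).
Definition E_epi (Y Z : rep) (g : hom Y Z) : Prop :=
  exists (X : rep) (f : hom X Y), E (Ses f g).

End Exact.

Definition pushout (X Y X' P : rep) (f : hom X Y) (h : hom X X')
    (h' : hom Y P) (f' : hom X' P) : Prop :=
  heq (hcomp f h') (hcomp h f') /\
  forall (W : rep) (u : hom Y W) (v : hom X' W),
    heq (hcomp f u) (hcomp h v) ->
    exists w : hom P W,
      [/\ heq (hcomp h' w) u, heq (hcomp f' w) v
        & forall w' : hom P W, heq (hcomp h' w') u -> heq (hcomp f' w') v ->
            heq w' w].

Definition pullback (Y Z Z' P : rep) (g : hom Y Z) (h : hom Z' Z)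
    (h' : hom P Y) (g' : hom P Z') : Prop :=
  heq (hcomp h' g) (hcomp g' h) /\
  forall (W : rep) (u : hom W Y) (v : hom W Z'),
    heq (hcomp u g) (hcomp v h) ->
    exists w : hom W P,
      [/\ heq (hcomp w h') u, heq (hcomp w g') v
        & forall w' : hom W P, heq (hcomp w' h') u -> heq (hcomp w' g') v ->
            heq w' w].

Definition exact_structure (E : ses -> Prop) : Prop :=
  (forall s, E s -> exact s) /\
  (forall s s', E s -> ses_iso s s' -> E s') /\
  (forall s, split_ses s -> E s) /\
  (forall (X Y Z : rep) (f : hom X Y) (g : hom Y Z),
      E_mono E f -> E_mono E g -> E_mono E (hcomp f g)) /\
  (forall (X Y Z : rep) (f : hom X Y) (g : hom Y Z),
      E_epi E f -> E_epi E g -> E_epi E (hcomp f g)) /\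
  (forall s, E s -> forall (X' P : rep) (h : hom (sX s) X')
      (h' : hom (sY s) P) (f' : hom X' P),
      pushout (sf s) h h' f' -> E_mono E f') /\
  (forall s, E s -> forall (Z' P : rep) (h : hom Z' (sZ s))
      (h' : hom P (sY s)) (g' : hom P Z'),
      pullback (sg s) h h' g' -> E_epi E g').

Definition projective (P : rep) : Prop :=
  forall (Y Z : rep) (g : hom Y Z) (u : hom P Z),
    (forall i, row_full (hmat g i)) -> exists v : hom P Y, heq (hcomp v g) u.

Definition ext1_self_vanish (T : rep) : Prop :=
  forall (Y : rep) (f : hom T Y) (g : hom Y T),
    exact_pair f g -> exists r : hom Y T, heq (hcomp f r) (hid T).

Definition tilting (T : rep) : Prop :=
  ext1_self_vanish T /\
  forall P : rep, projective P ->
    exists (T0 T1 : rep) (f : hom P T0) (g : hom T0 T1),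
      [/\ exact_pair f g, addT T T0 & addT T T1].

Definition left_approx (M : rep -> Prop) (X C : rep) (f : hom X C) : Prop :=
  M C /\ forall (C' : rep) (u : hom X C'), M C' ->
    exists v : hom C C', heq (hcomp f v) u.

Definition left_minimal (X C : rep) (f : hom X C) : Prop :=
  forall alpha : hom C C, heq (hcomp f alpha) f -> is_iso_hom alpha.

Definition right_approx (M : rep -> Prop) (X C : rep) (g : hom C X) : Prop :=
  M C /\ forall (C' : rep) (u : hom C' X), M C' ->
    exists v : hom C' C, heq (hcomp v g) u.

Definition right_minimal (X C : rep) (g : hom C X) : Prop :=
  forall beta : hom C C, heq (hcomp beta g) g -> is_iso_hom beta.

Definition left_mutation (E : ses -> Prop) (T T' : rep) : Prop :=
  exists (U Tt C : rep) (f : hom U C),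
    indec U /\ iso T (dsum Tt U) /\
    left_approx (addT Tt) f /\ left_minimal f /\ E_mono E f /\
    (exists (K : rep) (g : hom C K), exact_pair f g /\ iso T' (dsum Tt K)).

Definition right_mutation (E : ses -> Prop) (T T' : rep) : Prop :=
  exists (U Tt C : rep) (g : hom C U),
    indec U /\ iso T (dsum Tt U) /\
    right_approx (addT Tt) g /\ right_minimal g /\ E_epi E g /\
    (exists (K : rep) (f : hom K C), exact_pair f g /\ iso T' (dsum Tt K)).

(* mut_equiv E T T' : T' is isomorphic to an iterated E-mutation of T
   (the case "mu_{U,E}(T) = T" is subsumed by reflexivity) *)
Inductive mut_equiv (E : ses -> Prop) (T : rep) : rep -> Prop :=
  | me_iso T' : iso T T' -> mut_equiv E T T'
  | me_left T1 T2 : mut_equiv E T T1 -> left_mutation E T1 T2 -> mut_equiv E T T2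
  | me_right T1 T2 : mut_equiv E T T1 -> right_mutation E T1 T2 -> mut_equiv E T T2.

Definition GenE (E : ses -> Prop) (C : rep -> Prop) : rep -> Prop :=
  add (fun Z => exists s : ses, [/\ E s, C (sY s) & sZ s = Z]).

Definition SubE (E : ses -> Prop) (C : rep -> Prop) : rep -> Prop :=
  add (fun K => exists s : ses, [/\ E s, C (sY s) & sX s = K]).

Fixpoint GSi (E : ses -> Prop) (C : rep -> Prop) (i : nat) : rep -> Prop :=
  match i with
  | 0%N => C
  | i'.+1 => add (fun X => GenE E (GSi E C i') X \/ SubE E (GSi E C i') X)
  end.

Definition GS (E : ses -> Prop) (C : rep -> Prop) (X : rep) : Prop :=
  exists i : nat, GSi E C i X.

Definition GST (E : ses -> Prop) (T : rep) : rep -> Prop := GS E (addT T).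

End Reps.

(* Main.v *)
Require Import Defs.
From mathcomp Require Import all_boot all_order all_algebra.
Set Implicit Arguments. Unset Strict Implicit. Unset Printing Implicit Defensive.
Import GRing.Theory.
Local Open Scope ring_scope.


Section Aux.
Variable F : fieldType.
Variable Q : quiver.
Implicit Types X Y Z A B : rep F Q.

Lemma summand_refl X : is_summand X X.
Proof. by exists (hid X), (hid X) => i /=; rewrite mulmx1. Qed.

Lemma summand_trans X Y Z : is_summand X Y -> is_summand Y Z -> is_summand X Z.
Proof.
move=> [s1 [r1 H1]] [s2 [r2 H2]].
exists (hcomp s1 s2), (hcomp r2 r1) => i /=.
move: (H1 i) (H2 i) => /= E1 E2.
by rewrite mulmxA -(mulmxA (hmat s1 i)) E2 mulmx1 E1.
Qed.

Lemma iso_summand X Y : iso X Y -> is_summand X Y.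
Proof. by move=> [f [g [H1 H2]]]; exists f, g. Qed.

Lemma iso_sym X Y : iso X Y -> iso Y X.
Proof. by move=> [f [g [H1 H2]]]; exists g; exists f. Qed.

Lemma inl_comm A B (a : 'I_(na Q)) :
  rmap A a *m row_mx 1%:M 0 = row_mx 1%:M 0 *m rmap (dsum A B) a.
Proof.
by rewrite /= mul_row_block !mul1mx !mul0mx !addr0 mul_mx_row mulmx1 mulmx0.
Qed.

Lemma outl_comm A B (a : 'I_(na Q)) :
  rmap (dsum A B) a *m col_mx 1%:M 0 = col_mx 1%:M 0 *m rmap A a.
Proof.
by rewrite /= mul_block_col !mulmx1 !mulmx0 !addr0 mul_col_mx mul1mx mul0mx.
Qed.

Lemma summand_dsum_l A B : is_summand A (dsum A B).
Proof.
exists (@Defs.Hom _ _ A (dsum A B) (fun i => row_mx 1%:M 0) (@inl_comm A B)), (@Defs.Hom _ _ (dsum A B) A (fun i => col_mx 1%:M 0) (@outl_comm A B)) => i /=.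
by rewrite mul_row_col mulmx1 mulmx0 addr0.
Qed.

Lemma dsum_hom_comm A B A' B' (f : Defs.hom A A') (g : Defs.hom B B') (a : 'I_(na Q)) :
  rmap (dsum A B) a *m block_mx (hmat f (tgt a)) 0 0 (hmat g (tgt a))
  = block_mx (hmat f (src a)) 0 0 (hmat g (src a)) *m rmap (dsum A' B') a.
Proof.
by rewrite /= !mulmx_block !mulmx0 !mul0mx !addr0 !add0r !hcomm.
Qed.

Definition dsum_hom A B A' B' (f : Defs.hom A A') (g : Defs.hom B B') :
  Defs.hom (dsum A B) (dsum A' B') :=
  @Defs.Hom _ _ (dsum A B) (dsum A' B') (fun i => block_mx (hmat f i) 0 0 (hmat g i)) (dsum_hom_comm f g).

Lemma summand_dsum A B A' B' :
  is_summand A A' -> is_summand B B' -> is_summand (dsum A B) (dsum A' B').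
Proof.
move=> [s1 [r1 H1]] [s2 [r2 H2]].
exists (dsum_hom s1 s2), (dsum_hom r1 r2) => i /=.
rewrite mulmx_block !mulmx0 !mul0mx !addr0 !add0r.
by move: (H1 i) (H2 i) => /= -> ->; rewrite -scalar_mx_block.
Qed.
End Aux.


Section Aux2.
Variable F : fieldType.
Variable Q : quiver.
Implicit Types X Y Z A B : rep F Q.

Lemma zin_comm X (a : 'I_(na Q)) :
  rmap (zrep F Q) a *m (0 : 'M_(0, rdim X (tgt a))) = (0 : 'M_(0, rdim X (src a))) *m rmap X a.
Proof. by rewrite mulmx0 mul0mx. Qed.

Definition zin X : Defs.hom (zrep F Q) X :=
  @Defs.Hom _ _ (zrep F Q) X (fun i => 0) (@zin_comm X).

Lemma zout_comm X (a : 'I_(na Q)) :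
  rmap X a *m (0 : 'M_(rdim X (tgt a), 0)) = (0 : 'M_(rdim X (src a), 0)) *m rmap (zrep F Q) a.
Proof. by rewrite mulmx0 mul0mx. Qed.

Definition zout X : Defs.hom X (zrep F Q) :=
  @Defs.Hom _ _ X (zrep F Q) (fun i => 0) (@zout_comm X).

Lemma split_zero X : split_ses (Ses (zin X) (hid X)).
Proof.
split.
  move=> i /=; split.
  - by rewrite /row_free mxrank0.
  - by rewrite -sub1mx submx_refl.
  - apply/andP; split; first exact: sub0mx.
    have : (kermx (1%:M : 'M[F]_(rdim X i)) == 0).
      by rewrite kermx_eq0 row_free_unit unitmx1.
    by move/eqP ->; rewrite sub0mx.
exists (zout X) => i /=; apply/matrixP => -[] //.
Qed.
End Aux2.


Section Fac.
Variable F : fieldType.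
Variable Q : quiver.
Implicit Types X Y Z A B : rep F Q.

Lemma hid_iso X : is_iso_hom (hid X).
Proof. by exists (hid X); split => i /=; rewrite mulmx1. Qed.

Section Coker.
Variables (Y Z Z' : rep F Q) (g0 : Defs.hom Y Z) (g : Defs.hom Y Z').
Hypothesis Hfull : forall i, row_full (hmat g0 i).
Hypothesis Hker : forall i (M : 'M[F]_(rdim Y i)), M *m hmat g0 i = 0 -> M *m hmat g i = 0.

Lemma coker_key i : hmat g0 i *m (pinvmx (hmat g0 i) *m hmat g i) = hmat g i.
Proof.
have H : (hmat g0 i *m pinvmx (hmat g0 i) - 1%:M) *m hmat g0 i = 0.
  by rewrite mulmxBl -mulmxA mulVpmx // mulmx1 mul1mx subrr.
move: (Hker H); rewrite mulmxBl mul1mx mulmxA => /eqP; rewrite subr_eq0.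
by move/eqP.
Qed.

Lemma cfac_comm (a : 'I_(na Q)) :
  rmap Z a *m (pinvmx (hmat g0 (tgt a)) *m hmat g (tgt a))
  = (pinvmx (hmat g0 (src a)) *m hmat g (src a)) *m rmap Z' a.
Proof.
rewrite -mulmxA -hcomm.
have -> : rmap Z a = pinvmx (hmat g0 (src a)) *m (rmap Y a *m hmat g0 (tgt a)).
  by rewrite hcomm mulmxA mulVpmx // mul1mx.
by rewrite -[LHS]mulmxA -(mulmxA (rmap Y a)) coker_key.
Qed.

Definition cfac : Defs.hom Z Z' :=
  @Defs.Hom _ _ Z Z' (fun i => pinvmx (hmat g0 i) *m hmat g i) cfac_comm.

Lemma cfac_eq : heq (hcomp g0 cfac) g.
Proof. by move=> i /=; rewrite coker_key. Qed.
End Coker.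

Section Ker.
Variables (X X' Y : rep F Q) (f0 : Defs.hom X Y) (f : Defs.hom X' Y).
Hypothesis Hfree : forall i, row_free (hmat f i).
Hypothesis Hsub : forall i, (hmat f0 i <= hmat f i)%MS.

Lemma ker_key i : (hmat f0 i *m pinvmx (hmat f i)) *m hmat f i = hmat f0 i.
Proof.
by case/submxP: (Hsub i) => W ->; rewrite -(mulmxA W) -(mulmxA W) mulmxVp // mul1mx.
Qed.

Lemma kfac_comm (a : 'I_(na Q)) :
  rmap X a *m (hmat f0 (tgt a) *m pinvmx (hmat f (tgt a)))
  = (hmat f0 (src a) *m pinvmx (hmat f (src a))) *m rmap X' a.
Proof.
have E : rmap X' a = (rmap X' a *m hmat f (tgt a)) *m pinvmx (hmat f (tgt a)).
  by rewrite -mulmxA mulmxVp // mulmx1.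
rewrite E hcomm.
rewrite (mulmxA (hmat f0 (src a) *m pinvmx (hmat f (src a)))).
rewrite (mulmxA (hmat f0 (src a) *m pinvmx (hmat f (src a)))) ker_key.
by rewrite -hcomm -[RHS]mulmxA.
Qed.

Definition kfac : Defs.hom X X' :=
  @Defs.Hom _ _ X X' (fun i => hmat f0 i *m pinvmx (hmat f i)) kfac_comm.

Lemma kfac_eq : heq (hcomp kfac f) f0.
Proof. by move=> i /=; rewrite ker_key. Qed.
End Ker.
End Fac.


Section Isos.
Variable F : fieldType.
Variable Q : quiver.
Implicit Types X Y Z A B : rep F Q.

Lemma mx_inv_l m n (P0 : 'M[F]_(m, n)) (g0 : 'M_(n, m)) p (g : 'M_(n,p)) c d :
  P0 *m g0 = 1%:M -> g0 *m c = g -> g *m d = g0 -> c *m d = 1%:M.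
Proof.
move=> H1 H2 H3.
by rewrite -[c *m d]mul1mx -H1 -mulmxA (mulmxA g0) H2 H3.
Qed.

Lemma mx_inv_r m n (L0 : 'M[F]_(n, m)) (f0 : 'M_(m, n)) p (f : 'M_(p,n)) c d :
  f0 *m L0 = 1%:M -> c *m f = f0 -> d *m f0 = f -> c *m d = 1%:M.
Proof.
move=> H1 H2 H3.
by rewrite -[c *m d]mulmx1 -H1 mulmxA -(mulmxA c) H3 H2.
Qed.

Lemma ker_trans X Y Z Z' (f : Defs.hom X Y) (g0 : Defs.hom Y Z) (g : Defs.hom Y Z') :
  exact_pair f g0 -> exact_pair f g ->
  forall i (M : 'M[F]_(rdim Y i)), M *m hmat g0 i = 0 -> M *m hmat g i = 0.
Proof.
move=> H0 H i M /sub_kermxP HM; apply/sub_kermxP.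
case: (H0 i) => _ _ /andP [_ H0b]; case: (H i) => _ _ /andP [Hb _].
exact: submx_trans (submx_trans HM H0b) Hb.
Qed.

Lemma coker_ses_iso X Y Z Z' (f : Defs.hom X Y) (g0 : Defs.hom Y Z) (g : Defs.hom Y Z') :
  exact_pair f g0 -> exact_pair f g -> ses_iso (Ses f g0) (Ses f g).
Proof.
move=> H0 H.
have F0 : forall i, row_full (hmat g0 i) by move=> i; case: (H0 i).
have F1 : forall i, row_full (hmat g i) by move=> i; case: (H i).
have K0 := ker_trans H0 H; have K1 := ker_trans H H0.
exists (hid X), (hid Y), (cfac F0 K0); split.
- exact: hid_iso.
- exact: hid_iso.
- exists (cfac F1 K1); split => i /=.
  + apply: (mx_inv_l (mulVpmx (F0 i))); first exact: (cfac_eq F0 K0 i).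
    exact: (cfac_eq F1 K1 i).
  + apply: (mx_inv_l (mulVpmx (F1 i))); first exact: (cfac_eq F1 K1 i).
    exact: (cfac_eq F0 K0 i).
- by move=> i /=; rewrite mulmx1 mul1mx.
- by move=> i /=; rewrite mul1mx coker_key.
Qed.

Lemma ker_ses_iso X X' Y Z (f0 : Defs.hom X Y) (f : Defs.hom X' Y) (g : Defs.hom Y Z) :
  exact_pair f0 g -> exact_pair f g -> ses_iso (Ses f0 g) (Ses f g).
Proof.
move=> H0 H.
have F0 : forall i, row_free (hmat f0 i) by move=> i; case: (H0 i).
have F1 : forall i, row_free (hmat f i) by move=> i; case: (H i).
have S0 : forall i, (hmat f0 i <= hmat f i)%MS.
  move=> i; case: (H0 i) => _ _ /andP [Ha _]; case: (H i) => _ _ /andP [_ Hb].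
  exact: submx_trans Ha Hb.
have S1 : forall i, (hmat f i <= hmat f0 i)%MS.
  move=> i; case: (H i) => _ _ /andP [Ha _]; case: (H0 i) => _ _ /andP [_ Hb].
  exact: submx_trans Ha Hb.
exists (kfac F1 S0), (hid Y), (hid Z); split.
- exists (kfac F0 S1); split => i /=.
  + apply: (mx_inv_r (mulmxVp (F0 i))); first exact: (kfac_eq F1 S0 i).
    exact: (kfac_eq F0 S1 i).
  + apply: (mx_inv_r (mulmxVp (F1 i))); first exact: (kfac_eq F0 S1 i).
    exact: (kfac_eq F1 S0 i).
- exact: hid_iso.
- exact: hid_iso.
- by move=> i /=; rewrite mulmx1 ker_key.
- by move=> i /=; rewrite mulmx1 mul1mx.
Qed.
End Isos.


Section GSth.
Variable F : fieldType.
Variable Q : quiver.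
Implicit Types X Y Z A B : rep F Q.
Implicit Types P C D : rep F Q -> Prop.

Lemma all_in_mono P P' s : (forall X, P X -> P' X) -> all_in P s -> all_in P' s.
Proof. by move=> H; elim: s => //= a s IH [Ha Hs]; split; auto. Qed.

Lemma add_mono P P' X : (forall X, P X -> P' X) -> Defs.add P X -> Defs.add P' X.
Proof. by move=> H [s [Hs HX]]; exists s; split => //; exact: all_in_mono Hs. Qed.

Lemma add_incl P X : P X -> Defs.add P X.
Proof. by move=> HX; exists [:: X]; split => //=; exact: summand_dsum_l. Qed.

Lemma add_summand P X Y : is_summand X Y -> Defs.add P Y -> Defs.add P X.
Proof. by move=> HXY [s [Hs HY]]; exists s; split => //; exact: summand_trans HY. Qed.

Variable E : ses F Q -> Prop.
Hypothesis HE : exact_structure E.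

Lemma gen_incl D X : D X -> GenE E D X.
Proof.
move=> HX; apply: add_incl; exists (Ses (zin X) (hid X)); split => //.
by case: HE => _ [_ [Hs _]]; apply: Hs; exact: split_zero.
Qed.

Lemma GSi_step C i X : GSi E C i X -> GSi E C i.+1 X.
Proof. by move=> H; apply: add_incl; left; exact: gen_incl. Qed.

Lemma GSi_le C i j X : (i <= j)%N -> GSi E C i X -> GSi E C j X.
Proof.
elim: j => [|j IH]; first by rewrite leqn0 => /eqP ->.
rewrite leq_eqVlt => /orP [/eqP -> //|Hij] H.
by apply: GSi_step; exact: IH.
Qed.

Lemma all_in_GS C s : all_in (GS E C) s -> exists J, all_in (GSi E C J) s.
Proof.
elim: s => [|a s IH] /=; first by exists 0%N.
move=> [[i Ha] /IH [J HJ]]; exists (maxn i J); split.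
  by apply: GSi_le Ha; exact: leq_maxl.
by apply: all_in_mono HJ => Y; apply: GSi_le; exact: leq_maxr.
Qed.

Lemma GS_add C X : Defs.add (GS E C) X -> GS E C X.
Proof.
move=> [s [Hs HX]]; case: (all_in_GS Hs) => J HJ.
exists J.+1; exists s; split => //.
by apply: all_in_mono HJ => Y HY; left; exact: gen_incl.
Qed.

Lemma GSi_Cmono C C' i X : (forall X, C X -> C' X) -> GSi E C i X -> GSi E C' i X.
Proof.
move=> H; elim: i X => [|i IH] X //=; first exact: H.
apply: add_mono => Y [HY|HY]; [left|right]; move: HY; apply: add_mono.
  by move=> Z [s [Hs HsY HsZ]]; exists s; split => //; exact: IH.
by move=> Z [s [Hs HsY HsZ]]; exists s; split => //; exact: IH.
Qed.

Lemma GenE_GS C X : GenE E (GS E C) X -> GS E C X.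
Proof.
move=> H; apply: GS_add; move: H; apply: add_mono => Z [s [Hs [i Hi] HZ]].
exists i.+1; apply: add_incl; left; apply: add_incl; exists s; split => //.
Qed.

Lemma SubE_GS C X : SubE E (GS E C) X -> GS E C X.
Proof.
move=> H; apply: GS_add; move: H; apply: add_mono => Z [s [Hs [i Hi] HZ]].
exists i.+1; apply: add_incl; right; apply: add_incl; exists s; split => //.
Qed.

Lemma GS_idem C i X : GSi E (GS E C) i X -> GS E C X.
Proof.
elim: i X => [|i IH] X //= H; apply: GS_add; move: H; apply: add_mono.
move=> Y [HY|HY].
  by apply: GenE_GS; move: HY; apply: add_mono => Z [s [Hs HsY HsZ]]; exists s; split => //; exact: IH.
by apply: SubE_GS; move: HY; apply: add_mono => Z [s [Hs HsY HsZ]]; exists s; split => //; exact: IH.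
Qed.

Lemma GS_sub C1 C2 X : (forall Y, C1 Y -> GS E C2 Y) -> GS E C1 X -> GS E C2 X.
Proof. by move=> H [i Hi]; apply: (@GS_idem C2 i); exact: GSi_Cmono Hi. Qed.

Lemma GS_summand C X Y : is_summand X Y -> GS E C Y -> GS E C X.
Proof. by move=> HXY HY; apply: GS_add; apply: add_summand HXY _; exact: add_incl. Qed.

Lemma addT_GS C T X : GS E C T -> addT T X -> GS E C X.
Proof. by move=> HT HX; apply: GS_add; move: HX; apply: add_mono => Y ->. Qed.

Lemma dsum_GS C A B : GS E C A -> GS E C B -> GS E C (dsum A B).
Proof.
move=> HA HB; apply: GS_add; exists [:: A; B]; split => //=.
by apply: summand_dsum; [exact: summand_refl | exact: summand_dsum_l].
Qed.

Lemma GST_self T : GST E T T.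
Proof. by exists 0%N; apply: add_incl. Qed.

Lemma GST_sub T1 T2 X : GST E T2 T1 -> GST E T1 X -> GST E T2 X.
Proof. by move=> H; apply: GS_sub => Y; apply: addT_GS. Qed.

Lemma left_mut_eq T1 T2 : left_mutation E T1 T2 -> forall X, GST E T1 X <-> GST E T2 X.
Proof.
case: HE => Hex [Hiso [_ _]].
move=> [U [Tt [C [f [_ [HT1 [[HC _] [_ [[Z [g0 Hs]] [K [g [Hfg HT2]]]]]]]]]]]].
have HT1s := iso_summand (iso_sym HT1); have HT2s := iso_summand (iso_sym HT2).
have HT1s' := iso_summand HT1; have HT2s' := iso_summand HT2.
have Ht2 : GST E T2 Tt.
  apply: GS_summand (summand_dsum_l Tt K) _.
  exact: GS_summand HT2s (GST_self T2).
have Ht1 : GST E T1 Tt.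
  apply: GS_summand (summand_dsum_l Tt U) _.
  exact: GS_summand HT1s (GST_self T1).
move=> X; split; apply: GST_sub.
- apply: GS_summand HT1s' _; apply: dsum_GS => //.
  apply: SubE_GS; apply: add_incl; exists (Ses f g0); split => //.
  exact: addT_GS HC.
- apply: GS_summand HT2s' _; apply: dsum_GS => //.
  apply: GenE_GS; apply: add_incl; exists (Ses f g); split => //=; last exact: addT_GS HC.
  apply: (Hiso _ _ Hs); apply: coker_ses_iso => //; exact: (Hex _ Hs).
Qed.

Lemma right_mut_eq T1 T2 : right_mutation E T1 T2 -> forall X, GST E T1 X <-> GST E T2 X.
Proof.
case: HE => Hex [Hiso [_ _]].
move=> [U [Tt [C [g [_ [HT1 [[HC _] [_ [[Z [f0 Hs]] [K [f [Hfg HT2]]]]]]]]]]]].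
have HT1s := iso_summand (iso_sym HT1); have HT2s := iso_summand (iso_sym HT2).
have HT1s' := iso_summand HT1; have HT2s' := iso_summand HT2.
have Ht2 : GST E T2 Tt.
  apply: GS_summand (summand_dsum_l Tt K) _.
  exact: GS_summand HT2s (GST_self T2).
have Ht1 : GST E T1 Tt.
  apply: GS_summand (summand_dsum_l Tt U) _.
  exact: GS_summand HT1s (GST_self T1).
move=> X; split; apply: GST_sub.
- apply: GS_summand HT1s' _; apply: dsum_GS => //.
  apply: GenE_GS; apply: add_incl; exists (Ses f0 g); split => //.
  exact: addT_GS HC.
- apply: GS_summand HT2s' _; apply: dsum_GS => //.
  apply: SubE_GS; apply: add_incl; exists (Ses f g); split => //=; last exact: addT_GS HC.
  apply: (Hiso _ _ Hs); apply: ker_ses_iso => //; exact: (Hex _ Hs).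
Qed.

Lemma mut_equiv_GS T T' : mut_equiv E T' T -> forall X, GST E T' X <-> GST E T X.
Proof.
elim => [T0 Hiso|T1 T2 _ IH Hm|T1 T2 _ IH Hm] X.
- split; apply: GST_sub.
  + exact: GS_summand (iso_summand Hiso) (GST_self T0).
  + exact: GS_summand (iso_summand (iso_sym Hiso)) (GST_self T').
- by move: (IH X) (left_mut_eq Hm X); tauto.
- by move: (IH X) (right_mut_eq Hm X); tauto.
Qed.
End GSth.


Theorem proposition5p16 (F : closedFieldType) (Q : quiver)
  (HQ : ADE_quiver Q)
  (E : ses F Q -> Prop) (HE : exact_structure E)
  (T T' : rep F Q) (HT : tilting T) (HT' : tilting T')
  (Hequiv : mut_equiv E T' T) :
  forall X : rep F Q, GST E T' X <-> GST E T X.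
Proof. exact: (mut_equiv_GS HE Hequiv). Qed.
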